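(* Assume (R). For $n\ge k\ge0$, $$a_{n,k}:=\frac{d^k}{dx^k}A^\star_{n,2k}(x)\Big|_{x=1}=(-1)^nk!\sum_{\nu=0}^{k}\binom{2k-\nu}{k}\binom{n}{\nu}\alpha_{n-\nu}.$$ For $n\ge2$ and $0\le k\le n-2$, $$a_{n,k+2}=(4k+6)\,a_{n,k+1}+n(n-1)\,a_{n-2,k}.$$ For odd $n\ge1$, $A_n(x)=(2x-1)F_n(x(x-1))$ and $\hat f_{n,k}=(-1)^ka_{n,k}$ for $0\le k\le\lfloor n/2\rfloor$.
   Context: Let $(\alpha_n)_{n\ge0}$ be an arbitrary sequence of complex numbers with Appell polynomials $A_n(x)=\sum_{\nu=0}^{n}\binom{n}{\nu}\alpha_{n-\nu}x^\nu$; property (R) means $A_n(1-x)=(-1)^nA_n(x)$ for all $n\ge0$. For $n\ge0,k\in\mathbb Z$ let $A^\star_{n,k}(x)=x^kA_n(x^{-1})$. Let $d_n=\lfloor n/2\rfloor$, $\delta_n=1$ if $n$ odd, $0$ otherwise. Under (R), for each $n$ there is a unique polynomial $F_n(u)=\sum_{k\ge0}f_{n,k}u^k$ of degree at most $d_n$ with $A_n(x)=(2x-1)^{\delta_n}F_n(x(x-1))$; set $\hat f_{n,k}=k!\,f_{n,k}$. *)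

(* Defs.v *)
From HB Require Import structures.
From mathcomp Require Import all_boot all_order all_algebra.
From mathcomp Require Import reals complex.
Set Implicit Arguments. Unset Strict Implicit. Unset Printing Implicit Defensive.
Import Order.TTheory GRing.Theory Num.Theory.
Local Open Scope ring_scope.

Section Appell.
Variable R : realType.
Local Notation C := R[i].
Variable alpha : nat -> C.

Definition appell (n : nat) : {poly C} :=
  \sum_(nu < n.+1) (('C(n, nu))%:R * alpha (n - nu)) *: 'X^nu.

Definition propR : Prop :=
  forall (n : nat) (x : C), (appell n).[1 - x] = (-1) ^+ n * (appell n).[x].

End Appell.

(* Laurent polynomials in one variable, as finite formal sums
   sum_j c_j x^(e_j) with e_j : int, represented by the list of (c_j, e_j). *)
Section Laurent.
Variable F : fieldType.
Definition laurent := seq (F * int).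

Definition leval (p : laurent) (x : F) : F := \sum_(m <- p) m.1 * x ^ m.2.

Definition lderiv (p : laurent) : laurent :=
  [seq (m.1 *~ m.2, m.2 - 1) | m <- p].

Definition lderivn_at1 (k : nat) (p : laurent) : F := leval (iter k lderiv p) 1.
End Laurent.

Section Star.
Variable R : realType.
Local Notation C := R[i].
Variable alpha : nat -> C.

(* A*_{n,k}(x) = x^k A_n(x^{-1}) = sum_nu binom(n,nu) alpha_{n-nu} x^(k-nu),
   as a Laurent polynomial *)
Definition Astar (n : nat) (k : int) : laurent C :=
  [seq (('C(n, nu))%:R * alpha (n - nu), k - nu%:Z) | nu <- iota 0 n.+1].

Definition acoef (n k : nat) : C := lderivn_at1 k (Astar n (2 * k)%N%:Z).

Lemma Astar_eval (n : nat) (k : int) (x : C) : x != 0 ->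
  leval (Astar n k) x = x ^ k * (appell alpha n).[x^-1].
Proof.
move=> x0; rewrite /leval /Astar /appell big_map horner_sum mulr_sumr.
rewrite -(big_mkord xpredT (fun nu => x ^ k * ((('C(n, nu))%:R * alpha (n - nu)) *: 'X^nu).[x^-1])).
rewrite /index_iota subn0; apply: eq_bigr => nu _ /=.
rewrite hornerZ hornerXn mulrCA; congr (_ * _).
rewrite expfzDr //.
have -> : x ^ (- nu%:Z) = x^-1 ^+ nu by rewrite -exprz_inv.
by [].
Qed.
End Star.

(* Main.v *)
Require Import Defs.
From HB Require Import structures.
From mathcomp Require Import all_boot all_order all_algebra.
From mathcomp Require Import reals complex.
From mathcomp Require Import ring zify.
Import Order.TTheory GRing.Theory Num.Theory.
Set Implicit Arguments. Unset Strict Implicit. Unset Printing Implicit Defensive.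
Local Open Scope ring_scope.

Definition ffz (x : int) (k : nat) : int := \prod_(i < k) (x - i%:Z).

Lemma ffz0 x : ffz x 0 = 1.
Proof. by rewrite /ffz big_ord0. Qed.

Lemma ffzS x k : ffz x k.+1 = ffz x k * (x - k%:Z).
Proof. by rewrite /ffz big_ord_recr. Qed.

Lemma ffzSl x k : ffz x k.+1 = x * ffz (x - 1) k.
Proof.
rewrite /ffz big_ord_recl subr0; congr (_ * _); apply: eq_bigr => i _.
by rewrite lift0 -addn1 PoszD opprD addrA addrAC.
Qed.

Lemma ffz_diff x k : ffz x k.+1 - ffz (x - 1) k.+1 = k.+1%:Z * ffz (x - 1) k.
Proof. rewrite ffzSl ffzS. ring. Qed.

Lemma ffz_nat (a k : nat) : ffz a%:Z k = (a ^_ k)%N%:Z.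
Proof.
elim: k => [|k IH]; first by rewrite ffz0.
rewrite ffzS IH ffactnSr PoszM.
case: (leqP k a) => h; first by rewrite subzn.
by rewrite ffact_small // !mul0r.
Qed.

Section L.
Variable F : fieldType.

Definition Lf (k : nat) (s : int) (p : {poly F}) : F :=
  \sum_(j < size p) p`_j * (ffz (s - j%:Z) k)%:~R.

Lemma LN k s (p : {poly F}) N : (size p <= N)%N ->
  Lf k s p = \sum_(j < N) p`_j * (ffz (s - j%:Z) k)%:~R.
Proof.
move=> h; rewrite /Lf (big_ord_widen N (fun j => p`_j * (ffz (s - j%:Z) k)%:~R) h).
rewrite big_mkcond; apply: eq_bigr => j _; case: ifP => // /negbT.
by rewrite -leqNgt => hj; rewrite nth_default // mul0r.
Qed.

Lemma L_add k s p q : Lf k s (p + q) = Lf k s p + Lf k s q.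
Proof.
set N := maxn (size p) (size q).
rewrite !(@LN _ _ _ N) ?leq_maxl ?leq_maxr ?(leq_trans (size_polyD _ _)) //.
by rewrite -big_split; apply: eq_bigr => j _; rewrite coefD mulrDl.
Qed.

Lemma L_scale k s c p : Lf k s (c *: p) = c * Lf k s p.
Proof.
rewrite (@LN _ _ _ (size p)) ?size_scale_leq // /Lf mulr_sumr.
by apply: eq_bigr => j _; rewrite coefZ mulrA.
Qed.

Lemma L_sub k s p q : Lf k s (p - q) = Lf k s p - Lf k s q.
Proof. by rewrite L_add -scaleN1r L_scale mulN1r. Qed.

Lemma L0 k s : Lf k s 0 = 0.
Proof. by rewrite /Lf size_poly0 big_ord0. Qed.

Lemma L_sum k s (I : finType) (P : pred I) (G : I -> {poly F}) :
  Lf k s (\sum_(i | P i) G i) = \sum_(i | P i) Lf k s (G i).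
Proof. exact: (big_morph _ (@L_add k s) (@L0 k s)). Qed.

Lemma L_mulX k s p : Lf k s (p * 'X) = Lf k (s - 1) p.
Proof.
have h : (size (p * 'X)%R <= (size p).+1)%N.
  by rewrite (leq_trans (size_polyMleq _ _)) // size_polyX addn2.
rewrite (LN _ _ h) big_ord_recl coefMX eqxx mul0r add0r /Lf.
apply: eq_bigr => i _; rewrite coefMX lift0 /=.
by rewrite -addn1 PoszD opprD addrA addrAC.
Qed.

Lemma L_mulXsub1 k s p :
  Lf k s (p * ('X - 1)) = - k%:R * Lf k.-1 (s - 1) p.
Proof.
rewrite mulrBr mulr1 L_sub L_mulX.
case: k => [|k].
  rewrite mulr0n oppr0 mul0r -[RHS](subrr (Lf 0 s p)); congr (_ - _).
  by rewrite /Lf; apply: eq_bigr => j _; rewrite !ffz0.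
rewrite /Lf -sumrB mulr_sumr; apply: eq_bigr => j _ /=.
have E : ffz (s - 1 - j%:Z) k.+1 = ffz (s - j%:Z) k.+1 - k.+1%:Z * ffz (s - 1 - j%:Z) k.
  have -> : s - 1 - j%:Z = s - j%:Z - 1 by ring.
  by rewrite -ffz_diff; ring.
rewrite E intrB intrM. 
have -> : (k.+1%:Z)%:~R = k.+1%:R :> F by [].
ring.
Qed.

Lemma L_Xa k s a : Lf k s 'X^a = (ffz (s - a%:Z) k)%:~R.
Proof.
elim: a s => [|a IH] s.
  by rewrite expr0 /Lf size_poly1 big_ord1 coef1 mul1r subr0.
rewrite exprSr L_mulX IH; congr ((ffz _ k)%:~R).
by rewrite -addn1 PoszD opprD addrA addrAC.
Qed.

Lemma L_XaYb k s a b : Lf k s ('X^a * ('X - 1) ^+ b) =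
  (-1) ^+ b * (k ^_ b)%:R * (ffz (s - a%:Z - b%:Z) (k - b))%:~R.
Proof.
elim: b k s => [|b IH] k s.
  by rewrite !expr0 mulr1 L_Xa ffactn0 !mul1r subn0 subr0.
rewrite exprSr mulrA L_mulXsub1 IH.
case: k => [|k].
  by rewrite mulr0n oppr0 !mul0r mulr0 mul0r.
rewrite ffactSS subSS /=.
have -> : s - 1 - a%:Z - b%:Z = s - a%:Z - b.+1%:Z.
  by rewrite -addn1 PoszD; ring.
rewrite natrM exprS; ring.
Qed.
End L.

Lemma iter_lderiv (F : fieldType) k (p : laurent F) :
  iter k (@lderiv F) p = [seq (m.1 *~ ffz m.2 k, m.2 - k%:Z) | m <- p].
Proof.
elim: k => [|k IH] /=.
  by rewrite -[LHS]map_id; apply: eq_map => -[c e] /=; rewrite ffz0 mulr1z subr0.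
rewrite IH /lderiv -map_comp; apply: eq_map => -[c e] /=.
rewrite ffzS mulrzA -addn1 PoszD opprD addrA; congr (_, _).
Qed.

Lemma at1E (F : fieldType) k (p : laurent F) :
  lderivn_at1 k p = \sum_(m <- p) m.1 *~ ffz m.2 k.
Proof.
rewrite /lderivn_at1 iter_lderiv /leval big_map; apply: eq_bigr => m _ /=.
by rewrite exp1rz mulr1.
Qed.

Section Main.
Variable R : realType.
Local Notation C := R[i].
Variable alpha : nat -> C.

Definition cc n nu : C := ('C(n, nu))%:R * alpha (n - nu).

Lemma appellE n : appell alpha n = \poly_(nu < n.+1) cc n nu.
Proof. by rewrite poly_def. Qed.

Lemma acoefE n k : acoef alpha n k = Lf k (2 * k)%N%:Z (appell alpha n).
Proof.
rewrite /acoef at1E /Astar big_map /= appellE (LN _ _ (size_poly _ _)).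
rewrite -[0%N :: iota 1 n]/(index_iota 0 n.+1) big_mkord; apply: eq_bigr => j _ /=.
by rewrite coef_poly ltn_ord mulrzr.
Qed.

Lemma poly_eval_inj (p q : {poly C}) : (forall x, p.[x] = q.[x]) -> p = q.
Proof.
move=> h; apply/eqP; rewrite -subr_eq0; apply/eqP.
apply: (@roots_geq_poly_eq0 _ _ [seq i%:R | i <- iota 0 (size (p - q))]).
- by apply/allP => x _; rewrite /root hornerD hornerN h subrr.
- rewrite map_inj_uniq ?iota_uniq // => a b /eqP; rewrite eqr_nat => /eqP //.
- by rewrite size_map size_iota.
Qed.

Lemma R_comp n : propR alpha ->
  appell alpha n = (-1) ^+ n *: (appell alpha n \Po (1 - 'X)).
Proof.
move=> hR; apply: poly_eval_inj => x.
rewrite hornerZ horner_comp !hornerE hR mulrA -exprD addnn -mul2n exprM sqrrN !expr1n.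
by rewrite mul1r.
Qed.

Lemma ffactD n m p : (n ^_ (m + p) = n ^_ m * (n - m) ^_ p)%N.
Proof.
elim: p => [|p IH]; first by rewrite addn0 ffactn0 muln1.
by rewrite addnS !ffactnSr IH subnDA mulnA.
Qed.

Lemma intr_posz (x : nat) : (Posz x)%:~R = x%:R :> C.
Proof. by []. Qed.

Definition g k nu : nat := if (nu <= k)%N then ((2 * k - nu) ^_ k)%N else 0%N.

Lemma L_1subX k nu :
  Lf k (2 * k)%N%:Z ((1 - 'X) ^+ nu : {poly C}) = (g k nu)%:R.
Proof.
have -> : (1 - 'X) ^+ nu = (-1) ^+ nu *: ('X^0 * ('X - 1) ^+ nu) :> {poly C}.
  by rewrite expr0 mul1r -opprB -scaleN1r exprZn.
rewrite L_scale L_XaYb !mulrA -exprD addnn -mul2n exprM sqrrN !expr1n mul1r.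
rewrite /g; case: leqP => h.
  have h2 : (nu <= 2 * k)%N by lia.
  rewrite subr0 subzn // ffz_nat intr_posz -natrM; congr (_%:R).
  have e : (2 * k - nu - (k - nu) = k)%N by lia.
  by rewrite mulnC -{3}e -ffactD subnK.
by rewrite ffact_small // mul0r.
Qed.

Lemma compXn (p : {poly C}) m : 'X^m \Po p = p ^+ m.
Proof.
elim: m => [|m IH]; first by rewrite !expr0 -polyC1 comp_polyC.
by rewrite !exprS comp_polyM comp_polyX IH.
Qed.

Lemma acoef_g n k : propR alpha ->
  acoef alpha n k = (-1) ^+ n * \sum_(nu < n.+1) cc n nu * (g k nu)%:R.
Proof.
move=> hR; rewrite acoefE (R_comp n hR) L_scale; congr (_ * _).
rewrite /appell (big_morph (fun p => p \Po (1 - 'X)) (fun p q => comp_polyD p q _) (comp_poly0 _)).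
rewrite L_sum; apply: eq_bigr => nu _.
by rewrite comp_polyZ compXn L_scale L_1subX.
Qed.

Lemma part1 n k : propR alpha -> (k <= n)%N ->
  acoef alpha n k =
    (-1) ^+ n * (k`!)%:R *
      \sum_(nu < k.+1) ('C(2 * k - nu, k) * 'C(n, nu))%:R * alpha (n - nu)%N.
Proof.
move=> hR hk; rewrite acoef_g // -mulrA; congr (_ * _).
rewrite mulr_sumr (big_ord_widen n.+1 (fun nu => (k`!)%:R * (('C(2 * k - nu, k) * 'C(n, nu))%:R * alpha (n - nu)%N)) (hk : (k.+1 <= n.+1)%N)).
rewrite [RHS]big_mkcond; apply: eq_bigr => nu _ /=.
rewrite /g /cc ltnS; case: leqP => h; last by rewrite mulr0.
rewrite -bin_ffact !natrM; ring.
Qed.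

Lemma Hrec k j : (j <= k.+2)%N ->
  ((k + j).+2 ^_ k.+2 = (4 * k + 6) * (k + j) ^_ k.+1
     + (k.+2 - j) * (k.+1 - j) * (k + j) ^_ k)%N.
Proof.
move=> hj; rewrite !ffactSS ffactnSr addKn.
have e : ((k + j).+2 * (k + j).+1 = (4 * k + 6) * j + (k.+2 - j) * (k.+1 - j))%N.
  by nia.
by rewrite mulnA e; nia.
Qed.

Lemma g_rec k nu : (g k.+2 nu = (4 * k + 6) * g k.+1 nu + nu * (nu - 1) * g k (nu - 2))%N.
Proof.
rewrite /g; case: (leqP nu k.+2) => h2; last first.
  have -> : (nu <= k.+1)%N = false by lia.
  have -> : (nu - 2 <= k)%N = false by lia.
  by rewrite !muln0.
have -> : (nu - 2 <= k)%N = true by lia.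
set j := (k.+2 - nu)%N.
have hj : (j <= k.+2)%N by lia.
have e1 : (2 * k.+2 - nu = (k + j).+2)%N by lia.
have eg1 : ((if (nu <= k.+1)%N then (2 * k.+1 - nu) ^_ k.+1 else 0) = (k + j) ^_ k.+1)%N.
  case: ifP => h.
    by have -> : (2 * k.+1 - nu = k + j)%N by lia.
  have -> : j = 0%N by lia.
  by rewrite addn0 ffact_small.
have eg0 : (nu * (nu - 1) * (2 * k - (nu - 2)) ^_ k = (k.+2 - j) * (k.+1 - j) * (k + j) ^_ k)%N.
  case: (leqP 2 nu) => h.
    have -> : (2 * k - (nu - 2) = k + j)%N by lia.
    have -> : (k.+2 - j = nu)%N by lia.
    by have -> : (k.+1 - j = nu - 1)%N by lia.
  have -> : (nu * (nu - 1) = 0)%N by nia.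
  have -> : ((k.+2 - j) * (k.+1 - j) = 0)%N by nia.
  by [].
by rewrite e1 eg1 eg0; apply: Hrec.
Qed.

Lemma bin2 m i : ('C(m.+2, i.+2) * (i.+2 * i.+1) = m.+2 * m.+1 * 'C(m, i))%N.
Proof.
have h1 := mul_bin_diag m.+2 i.+1; have h2 := mul_bin_diag m.+1 i.
simpl in h1, h2. nia.
Qed.

Lemma shiftT m k :
  (m.+2 * m.+1)%N%:R * \sum_(nu < m.+1) cc m nu * (g k nu)%:R =
  \sum_(nu < m.+3) cc m.+2 nu * (nu * (nu - 1) * g k (nu - 2))%N%:R.
Proof.
rewrite [RHS]big_ord_recl big_ord_recl /= mulr0 !add0r mulr_sumr.
unfold bump; rewrite /= add1n.
have -> : (1 * (1 - 1) * g k (1 - 2) = 0)%N by rewrite subnn muln0 mul0n.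
rewrite mulr0 add0r; apply: eq_bigr => i _.
have -> : (1 + (1 + i) = i.+2)%N by lia.
rewrite /cc subSS.
have -> : (i.+2 - 2 = i)%N by lia.
have -> : (i.+2 - 1 = i.+1)%N by lia.
have e := congr1 (fun x => x%:R : C) (bin2 m i); rewrite /= !natrM in e.
rewrite !natrM.
transitivity (((m.+2)%:R * (m.+1)%:R * ('C(m, i))%:R) * (alpha (m - i) * (g k i)%:R)); first by ring.
rewrite -e; ring.
Qed.

Lemma part2 n k : propR alpha -> (2 <= n)%N -> (k <= n - 2)%N ->
  acoef alpha n k.+2 =
    (4 * k + 6)%N%:R * acoef alpha n k.+1 + (n * (n - 1))%N%:R * acoef alpha (n - 2) k.
Proof.
move=> hR hn _; case: n hn => [|[|m]] // _.
rewrite !acoef_g //.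
have -> : (m.+2 - 2 = m)%N by lia.
have -> : (m.+2 - 1 = m.+1)%N by lia.
have s : (-1) ^+ m.+2 = (-1) ^+ m :> C by rewrite !exprS !mulN1r opprK.
rewrite s [X in _ + X]mulrCA shiftT.
have key : \sum_(nu < m.+3) cc m.+2 nu * (g k.+2 nu)%:R =
  (4 * k + 6)%N%:R * \sum_(nu < m.+3) cc m.+2 nu * (g k.+1 nu)%:R +
  \sum_(nu < m.+3) cc m.+2 nu * (nu * (nu - 1) * g k (nu - 2))%N%:R.
  rewrite mulr_sumr -big_split; apply: eq_bigr => nu _ /=.
  rewrite g_rec natrD !natrM; ring.
rewrite key; ring.
Qed.

Lemma signK k : (-1) ^+ k * (-1) ^+ k = 1 :> C.
Proof. by rewrite -exprD addnn -mul2n exprM sqrrN !expr1n. Qed.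

Lemma P_split i : ('X *+ 2 - 1) * ('X * ('X - 1)) ^+ i =
  'X^(i.+1) * ('X - 1) ^+ i + 'X^i * ('X - 1) ^+ i.+1 :> {poly C}.
Proof. rewrite exprMn !exprS; ring. Qed.

Lemma Lval k i : Lf k (2 * k)%N%:Z (('X *+ 2 - 1) * ('X * ('X - 1)) ^+ i : {poly C}) =
  if i == k then (-1) ^+ k * (k`!)%:R else 0.
Proof.
rewrite P_split L_add !L_XaYb.
case: (ltngtP i k) => h.
- have ek : (k - i = (k - i.+1).+1)%N by lia.
  have ex : (2 * k)%N%:Z - i.+1%:Z - i%:Z = (2 * k)%N%:Z - i%:Z - i.+1%:Z by ring.
  have ed : (2 * k)%N%:Z - i%:Z - i.+1%:Z - (k - i.+1)%N%:Z = (k - i.+1).+1%N%:Z by lia.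
  rewrite ek ex ffzS ed ffactnSr ek intrM intr_posz !natrM exprS; ring.
- by rewrite !ffact_small ?(mulr0n, mulr0, mul0r, addr0) //; lia.
- subst i; rewrite subnn ffz0 ffactnn (ffact_small (ltnSn k)).
  by rewrite mulr0 mul0r addr0 mulr1.
Qed.

Lemma part3u n (F : {poly C}) :
  appell alpha n = ('X *+ 2 - 1) * (F \Po ('X * ('X - 1))) ->
  forall k, (k`!)%:R * F`_k = (-1) ^+ k * acoef alpha n k.
Proof.
move=> hA k; rewrite acoefE hA comp_polyE.
have -> : ('X *+ 2 - 1) * (\sum_(i < size F) F`_i *: ('X * ('X - 1)) ^+ i) =
  \sum_(i < size F) F`_i *: (('X *+ 2 - 1) * ('X * ('X - 1)) ^+ i) :> {poly C}.
  by rewrite mulr_sumr; apply: eq_bigr => i _; rewrite scalerAr.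
rewrite L_sum.
under eq_bigr => i _ do rewrite L_scale Lval.
have -> : \sum_(i < size F) F`_i * (if i == k :> nat then (-1) ^+ k * (k`!)%:R else 0)
   = F`_k * ((-1) ^+ k * (k`!)%:R).
  case: (ltnP k (size F)) => hk.
    rewrite (bigD1 (Ordinal hk)) //= eqxx big1 ?addr0 // => j hj.
    rewrite ifN ?mulr0 //; apply: contra hj => /eqP e; apply/eqP/val_inj; exact: e.
  rewrite nth_default // mul0r big1 // => j _.
  by rewrite ifN ?mulr0 // neq_ltn (leq_trans (ltn_ord j) hk).
transitivity (((-1) ^+ k * (-1) ^+ k) * (k`!%:R * F`_k)); first by rewrite signK mul1r.
ring.
Qed.

Lemma part3e n : propR alpha -> odd n ->
  exists F : {poly C}, (size F <= (n./2).+1)%N /\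
    appell alpha n = ('X *+ 2 - 1) * (F \Po ('X * ('X - 1))).
Proof.
move=> hR hn.
set A := appell alpha n.
set h : C := (2%:R)^-1.
have hh : h *+ 2 = 1.
  by rewrite /h -[_^-1 *+ 2]mulr_natr mulVf // pnatr_eq0.
have e2 : h%:P *+ 2 = 1 :> {poly C} by rewrite -rmorphMn hh.
set B := A \Po ('X + h%:P).
have hB : B \Po (- 'X) = - B.
  apply: poly_eval_inj => x.
  rewrite /B -comp_polyA !horner_comp !hornerE.
  have -> : - x + h = 1 - (x + h).
    by rewrite -hh mulr2n; ring.
  by rewrite hR -signr_odd hn expr1 mulN1r horner_comp !hornerE.
set E := even_poly B; set O := odd_poly B.
have hEO := poly_even_odd B; rewrite -/E -/O in hEO.
have hE : E \Po 'X^2 = 0.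
  have h1 : (E \Po 'X^2 + (O \Po 'X^2) * 'X) \Po (- 'X) =
            E \Po 'X^2 - (O \Po 'X^2) * 'X.
    rewrite comp_polyD comp_polyM comp_polyX -!comp_polyA compXn sqrrN.
    by rewrite -compXn mulrN.
  rewrite hEO hB -hEO in h1.
  have h2 : (E \Po 'X^2) *+ 2 = 0.
    rewrite mulr2n; transitivity ((E \Po 'X^2 - (O \Po 'X^2) * 'X) - (- (E \Po 'X^2 + (O \Po 'X^2) * 'X))); first by ring.
    by rewrite -h1 subrr.
  by rewrite -[E \Po 'X^2]scale1r -hh -scalerMnl scalerMnr h2 scaler0.
have hBO : B = (O \Po 'X^2) * 'X by rewrite -hEO hE add0r.
have hAB : A = B \Po ('X - h%:P) by rewrite /B comp_polyXaddC_K.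
set G := O \Po ('X + (h ^+ 2)%:P).
exists (h *: G); split.
  rewrite (leq_trans (size_scale_leq _ _)) // /G size_comp_poly2 ?size_XaddC //.
  rewrite (leq_trans (size_odd_poly _)) // /B size_comp_poly2 ?size_XaddC //.
  rewrite /A appellE (leq_trans (half_leq (size_poly _ _))) //.
  by rewrite -uphalfE uphalf_half; case: (odd n).
rewrite hAB hBO comp_polyM comp_polyX -comp_polyA compXn.
have sq : ('X - h%:P) ^+ 2 = ('X + (h ^+ 2)%:P) \Po ('X * ('X - 1)) :> {poly C}.
  rewrite comp_polyD comp_polyX comp_polyC rmorphXn.
  transitivity ('X * ('X - 1) + h%:P ^+ 2 + 'X * (1 - h%:P *+ 2)); first by ring.
  by rewrite e2 subrr mulr0 addr0.
rewrite sq comp_polyA -/G comp_polyZ -mul_polyC.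
have lin : 'X - h%:P = ('X *+ 2 - 1) * h%:P :> {poly C}.
  transitivity ('X * (h%:P *+ 2) - h%:P); first by rewrite e2 mulr1.
  ring.
rewrite lin; ring.
Qed.
End Main.

Unset Implicit Arguments.

Theorem mainTheorem16 (R : realType) (alpha : nat -> R[i]) :
  propR alpha ->
  (forall n k : nat, (k <= n)%N ->
     acoef alpha n k =
       (-1) ^+ n * (k`!)%:R *
         \sum_(nu < k.+1) ('C(2 * k - nu, k) * 'C(n, nu))%:R * alpha (n - nu)%N)
  /\ (forall n k : nat, (2 <= n)%N -> (k <= n - 2)%N ->
     acoef alpha n k.+2 =
       (4 * k + 6)%N%:R * acoef alpha n k.+1 + (n * (n - 1))%N%:R * acoef alpha (n - 2) k)
  /\ (forall n : nat, odd n ->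
       (exists F : {poly R[i]}, (size F <= (n./2).+1)%N /\
          appell alpha n = ('X *+ 2 - 1) * (F \Po ('X * ('X - 1))))
       /\ (forall F : {poly R[i]}, (size F <= (n./2).+1)%N ->
            appell alpha n = ('X *+ 2 - 1) * (F \Po ('X * ('X - 1))) ->
            forall k : nat, (k <= n./2)%N ->
              (k`!)%:R * F`_k = (-1) ^+ k * acoef alpha n k)).
Proof.
move=> hR; split; [|split].
- by move=> n k hk; apply: part1.
- by move=> n k hn hk; apply: part2.
- move=> n hn; split; first by apply: part3e.
  by move=> F _ hF k _; apply: part3u.
Qed.
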